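(* Let $S^0$ be an adequate semigroup with semilattice of idempotents $E^0$, let $I$ be a left regular band having $E^0$ as a semilattice transversal, and suppose there is a left action $(x,e)\mapsto x\ast e$ of $S^0$ on $I$ (so $(xy)\ast e=x\ast(y\ast e)$) with $x\ast(ef)=(x\ast e)(x\ast f)$ for all $x\in S^0$, $e,f\in I$. Let $W=\{(e,x)\in I\times S^0: e\in L_{x^+}\}$ with multiplication $(e,x)(g,y)=(e(x\ast g),xy)$, and suppose that $x\ast y^+=(xy)^+$ for all $x,y\in S^0$. Then: 1. for all $x,y\in S^0$ and $f\in L_{y^+}$, $x\ast f\in L_{(xy)^+}$; 2. $E(W)=\{(e,x)\in W: x\in E^0\}$; 3. $E(W)$ is a band.
   Context: For a semigroup $T$, $E(T)$ is its set of idempotents. In an adequate semigroup (abundant, i.e. every $\mathcal{R}^\ast$- and $\mathcal{L}^\ast$-class contains an idempotent, with commuting idempotents) $x^+$ denotes the unique idempotent $\mathcal{R}^\ast$-related to $x$, where $a\,\mathcal{R}^\ast\,b$ iff $xa=ya\Leftrightarrow xb=yb$ for all $x,y\in T^1$. A left regular band satisfies $xyx=xy$; $E^0$ is a semilattice transversal of $I$ if $E^0$ is a subsemilattice of $I$ and each element of $I$ has exactly one inverse in $E^0$. For $x\in E^0$, $L_x$ is the $\mathcal{L}$-class of $x$ in $I$. *)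

(* Defs.v *)
Set Implicit Arguments.

Section Defs.

Definition associative_op {T : Type} (m : T -> T -> T) : Prop :=
  forall a b c, m a (m b c) = m (m a b) c.

Definition idem {T : Type} (m : T -> T -> T) (a : T) : Prop := m a a = a.

(* multiplication by an element of T^1 = option T (None is the adjoined identity) *)
Definition mul1l {T : Type} (m : T -> T -> T) (u : option T) (a : T) : T :=
  match u with None => a | Some x => m x a end.
Definition mul1r {T : Type} (m : T -> T -> T) (a : T) (u : option T) : T :=
  match u with None => a | Some x => m a x end.

Definition Rstar {T : Type} (m : T -> T -> T) (a b : T) : Prop :=
  forall x y : option T, mul1l m x a = mul1l m y a <-> mul1l m x b = mul1l m y b.
Definition Lstar {T : Type} (m : T -> T -> T) (a b : T) : Prop :=
  forall x y : option T, mul1r m a x = mul1r m a y <-> mul1r m b x = mul1r m b y.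

Definition adequate {T : Type} (m : T -> T -> T) : Prop :=
  associative_op m /\
  (forall a, exists e, idem m e /\ Rstar m a e) /\
  (forall a, exists e, idem m e /\ Lstar m a e) /\
  (forall e f, idem m e -> idem m f -> m e f = m f e).

Definition left_regular_band {T : Type} (m : T -> T -> T) : Prop :=
  associative_op m /\ (forall a, idem m a) /\ (forall a b, m (m a b) a = m a b).

Definition Lgreen {T : Type} (m : T -> T -> T) (a b : T) : Prop :=
  (exists u : option T, a = mul1l m u b) /\ (exists v : option T, b = mul1l m v a).

Definition inverse_of {T : Type} (m : T -> T -> T) (a b : T) : Prop :=
  m (m a b) a = a /\ m (m b a) b = b.

End Defs.

(* Main.v *)
Require Import Defs.

Lemma lg_prop {I : Type} (m : I -> I -> I) (HI : left_regular_band m) a b :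
  Lgreen m a b -> m a b = a /\ m b a = b.
Proof.
  destruct HI as [As [Id _]]. intros [[u Hu] [v Hv]].
  split.
  - destruct u as [u|]; simpl in Hu; subst a.
    + rewrite <- As, (Id b). reflexivity.
    + apply Id.
  - destruct v as [v|]; simpl in Hv; subst b.
    + rewrite <- As, (Id a). reflexivity.
    + apply Id.
Qed.

Theorem lemma3p1
  (S I : Type) (mulS : S -> S -> S) (mulI : I -> I -> I)
  (plus : S -> S)            (* x |-> x^+ *)
  (emb : S -> I)             (* identification of E^0 = E(S^0) with a subset of I *)
  (act : S -> I -> I)        (* (x, e) |-> x * e *)
  (* S^0 is adequate; x^+ is the idempotent R*-related to x *)
  (HS : adequate mulS)
  (Hplus_idem : forall x, idem mulS (plus x))
  (Hplus_R : forall x, Rstar mulS x (plus x))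
  (* I is a left regular band *)
  (HI : left_regular_band mulI)
  (* E^0 is a subsemilattice of I: emb is injective and multiplicative on E^0 *)
  (Hemb_inj : forall e f, idem mulS e -> idem mulS f -> emb e = emb f -> e = f)
  (Hemb_mul : forall e f, idem mulS e -> idem mulS f ->
                emb (mulS e f) = mulI (emb e) (emb f))
  (* E^0 is a semilattice transversal: each element of I has exactly one inverse in E^0 *)
  (Htrans_ex : forall a : I, exists e, idem mulS e /\ inverse_of mulI a (emb e))
  (Htrans_uniq : forall (a : I) e f, idem mulS e -> idem mulS f ->
                   inverse_of mulI a (emb e) -> inverse_of mulI a (emb f) -> e = f)
  (* left action of S^0 on I by endomorphisms *)
  (Hact_assoc : forall x y e, act (mulS x y) e = act x (act y e))
  (Hact_hom : forall x e f, act x (mulI e f) = mulI (act x e) (act x f))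
  (* x * y^+ = (xy)^+ *)
  (Hplus_act : forall x y, act x (emb (plus y)) = emb (plus (mulS x y))) :
  let inW := fun (w : I * S) => Lgreen mulI (fst w) (emb (plus (snd w))) in
  let mulW := fun (w v : I * S) =>
      (mulI (fst w) (act (snd w) (fst v)), mulS (snd w) (snd v)) in
  let EW := fun (w : I * S) => inW w /\ mulW w w = w in
  (* 1 *)
  (forall x y f, Lgreen mulI f (emb (plus y)) ->
     Lgreen mulI (act x f) (emb (plus (mulS x y)))) /\
  (* 2: E(W) = {(e,x) in W : x in E^0} *)
  (forall w : I * S, EW w <-> (inW w /\ idem mulS (snd w))) /\
  (* 3: E(W) is a band (closed under the product of W; its elements are idempotent) *)
  (forall w v, EW w -> EW v -> EW (mulW w v)).
Proof.
  intros inW mulW EW.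
  destruct HS as [SAs [_ [_ Scomm]]].
  pose proof HI as [IAs [IId ILRB]].
  assert (Hpid : forall x, idem mulS x -> plus x = x).
  { intros x Hx. pose proof (Hplus_idem x) as Hp.
    assert (H1 : mulS x (plus x) = plus x).
    { apply (proj1 (Hplus_R x (Some x) None)). exact Hx. }
    assert (H2 : mulS (plus x) x = x).
    { apply (proj2 (Hplus_R x (Some (plus x)) None)). exact Hp. }
    rewrite <- H1, Scomm by assumption. exact H2. }
  assert (P1 : forall x y f, Lgreen mulI f (emb (plus y)) ->
     Lgreen mulI (act x f) (emb (plus (mulS x y)))).
  { intros x y f [[u Hu] [v Hv]]. split.
    - destruct u as [u|]; simpl in Hu; subst f; simpl.
      + exists (Some (act x u)). simpl. rewrite Hact_hom, Hplus_act. reflexivity.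
      + exists None. simpl. apply Hplus_act.
    - destruct v as [v|]; simpl in Hv.
      + exists (Some (act x v)). simpl. rewrite <- Hact_hom, <- Hv, Hplus_act. reflexivity.
      + exists None. simpl. rewrite <- Hv, Hplus_act. reflexivity. }
  assert (P2 : forall w : I * S, EW w <-> (inW w /\ idem mulS (snd w))).
  { intros [e x]. unfold EW, inW, mulW, idem; simpl. split.
    - intros [H1 H2]. split; [exact H1|]. injection H2; auto.
    - intros [H1 H2]. split; [exact H1|].
      rewrite H2. f_equal.
      rewrite (Hpid x H2) in H1.
      destruct (lg_prop _ HI _ _ H1) as [Heg Hge].
      assert (Hg : act x (emb x) = emb x).
      { pose proof (Hplus_act x x) as Hq. rewrite H2, (Hpid x H2) in Hq. exact Hq. }
      assert (Hgk : mulI (emb x) (act x e) = emb x).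
      { pose proof (f_equal (act x) Hge) as Hq. rewrite Hact_hom, Hg in Hq. exact Hq. }
      transitivity (mulI (mulI e (emb x)) (act x e)); [rewrite Heg; reflexivity|].
      rewrite <- IAs, Hgk. exact Heg. }
  split; [exact P1|]. split; [exact P2|].
  intros [e x] [f y] Hw Hv.
  apply P2 in Hw. apply P2 in Hv. simpl in Hw, Hv.
  destruct Hw as [Hw Hx]. destruct Hv as [Hv Hy].
  apply P2. unfold inW, mulW in *. simpl in *.
  assert (Hxy : idem mulS (mulS x y)).
  { unfold idem in *. rewrite <- SAs. rewrite (SAs y x y).
    rewrite <- (Scomm x y) by assumption. rewrite <- SAs, Hy, SAs, Hx. reflexivity. }
  split; [|exact Hxy].
  pose proof (P1 x y f Hv) as Hk.
  set (k := act x f) in *.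
  rewrite (Hpid _ Hxy) in Hk |- *.
  rewrite (Hpid x Hx) in Hw.
  set (h := emb (mulS x y)) in *.
  destruct (lg_prop _ HI _ _ Hw) as [Heg Hge].
  destruct (lg_prop _ HI _ _ Hk) as [Hkh Hhk].
  assert (Hh : h = mulI (emb y) (emb x)).
  { unfold h. rewrite (Scomm x y) by assumption. apply Hemb_mul; assumption. }
  assert (Hhe : mulI h e = h).
  { rewrite Hh, <- IAs, Hge. reflexivity. }
  split.
  - exists (Some (mulI e k)). simpl. rewrite <- IAs, Hkh. reflexivity.
  - exists (Some h). simpl. rewrite IAs, Hhe, Hhk. reflexivity.
Qed.
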